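(* Let $k\ge3$ and let $G=(V,E)$ be a connected $k$-uniform hypergraph (with $E\neq\emptyset$). (i) A nonzero vector $\mathbf x\in\mathbb C^n$ is an eigenvector of the Laplacian tensor $\mathcal D-\mathcal A$ corresponding to the eigenvalue $0$ if and only if there exist $\gamma\in\mathbb C\setminus\{0\}$ and integers $\alpha_i$ ($i\in[n]$) such that $x_i=\gamma\exp(\frac{2\alpha_i\pi}{k}\sqrt{-1})$ for all $i\in[n]$ and, for every edge $e\in E$, $\sum_{j\in e}\alpha_j=\sigma_e k$ for some integer $\sigma_e$. (ii) A nonzero vector $\mathbf x\in\mathbb C^n$ is an eigenvector of the signless Laplacian tensor $\mathcal D+\mathcal A$ corresponding to the eigenvalue $0$ if and only if there exist $\gamma\in\mathbb C\setminus\{0\}$ and integers $\alpha_i$ ($i\in[n]$) such that $x_i=\gamma\exp(\frac{2\alpha_i\pi}{k}\sqrt{-1})$ for all $i\in[n]$ and, for every edge $e\in E$, $\sum_{j\in e}\alpha_j=\sigma_e k+\frac{k}{2}$ for some integer $\sigma_e$.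
   Context: A $k$-uniform hypergraph $G=(V,E)$ has vertex set $V=[n]$ ($n\ge k$) and edge set $E$ of $k$-element subsets of $V$; $E_i=\{e\in E:i\in e\}$, $d_i=|E_i|$. $G$ is connected if every two distinct vertices $i,j$ are joined by a sequence of edges $e_1,\dots,e_m$ with $i\in e_1$, $j\in e_m$, $e_r\cap e_{r+1}\neq\emptyset$. The adjacency tensor $\mathcal A$ has $a_{i_1\dots i_k}=\frac1{(k-1)!}$ if $\{i_1,\dots,i_k\}\in E$, else $0$; $\mathcal D$ is diagonal with $d_{i\dots i}=d_i$. Thus $((\mathcal D\pm\mathcal A)\mathbf x^{k-1})_i=d_ix_i^{k-1}\pm\sum_{e\in E_i}\prod_{j\in e\setminus\{i\}}x_j$. A nonzero $\mathbf x\in\mathbb C^n$ is an eigenvector of a tensor $\mathcal T$ for eigenvalue $\lambda$ if $(\mathcal T\mathbf x^{k-1})_i=\lambda x_i^{k-1}$ for all $i\in[n]$, where $(\mathcal T\mathbf x^{k-1})_i=\sum_{i_2,\dots,i_k}t_{ii_2\dots i_k}x_{i_2}\cdots x_{i_k}$. *)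

(* Defs.v *)
(* Complex numbers are modelled by an arbitrary
   numeric algebraically closed field C (e.g. the complex numbers). *)
From HB Require Import structures.
From mathcomp Require Import all_boot all_order all_algebra.
Set Implicit Arguments. Unset Strict Implicit. Unset Printing Implicit Defensive.
Import Order.TTheory GRing.Theory Num.Theory.
Local Open Scope ring_scope.

Definition kuniform n (k : nat) (E : {set {set 'I_n}}) : Prop :=
  forall e, e \in E -> #|e| = k.

Definition hconnected n (E : {set {set 'I_n}}) : Prop :=
  forall i j : 'I_n, i != j ->
    exists (e1 : {set 'I_n}) (s : seq {set 'I_n}),
      [/\ all (fun e => e \in E) (e1 :: s), i \in e1, j \in last e1 s &
          path (fun a b => a :&: b != set0) e1 s].

(* A tensor of order k and dimension n: entries indexed by index sequences
   (only sequences of length k are relevant). *)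
Definition tensor (C : Type) n := seq 'I_n -> C.

Definition tapply (C : numClosedFieldType) n (k : nat) (T : tensor C n)
    (x : 'I_n -> C) (i : 'I_n) : C :=
  \sum_(t : (k.-1).-tuple 'I_n) T (i :: val t) * \prod_(j <- val t) x j.

Definition is_eigenvector (C : numClosedFieldType) n (k : nat) (T : tensor C n)
    (x : 'I_n -> C) (lam : C) : Prop :=
  (exists i, x i != 0) /\ forall i, tapply k T x i = lam * x i ^+ k.-1.

Definition adj_tensor (C : numClosedFieldType) n (k : nat)
    (E : {set {set 'I_n}}) : tensor C n :=
  fun t => if (size t == k) && ([set j in t] \in E)
           then ((k.-1)`!%:R)^-1 else 0.

Definition hdeg n (E : {set {set 'I_n}}) (i : 'I_n) : nat :=
  #|[set e in E | i \in e]|.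

Definition deg_tensor (C : numClosedFieldType) n (k : nat)
    (E : {set {set 'I_n}}) : tensor C n :=
  fun t => match t with
           | i :: r => if (size t == k) && all (fun j => j == i) r
                       then (hdeg E i)%:R else 0
           | [::] => 0
           end.

Definition laplacian (C : numClosedFieldType) n k E : tensor C n :=
  fun t => deg_tensor C k E t - adj_tensor C k E t.
Definition signless_laplacian (C : numClosedFieldType) n k E : tensor C n :=
  fun t => deg_tensor C k E t + adj_tensor C k E t.

(* exp(2 a pi sqrt(-1) / k) for integer a: k.-root (-1) = exp(pi sqrt(-1)/k)
   (the k-th root of -1 of minimal nonnegative argument). *)
Definition expik (C : numClosedFieldType) (k : nat) (a : int) : C :=
  ((k.-root (-1 : C)) ^+ 2) ^ a.

(* Main.v *)
Require Import Defs.
From HB Require Import structures.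
From mathcomp Require Import all_boot all_order all_algebra.
From mathcomp Require Import cyclic separable cyclotomic.
From mathcomp Require Import ring.
Import Order.TTheory GRing.Theory Num.Theory.
Set Implicit Arguments. Unset Strict Implicit. Unset Printing Implicit Defensive.
Local Open Scope ring_scope.

Lemma sq_le_nneg (R : numDomainType) (x y : R) :
  0 <= x -> 0 <= y -> x ^+ 2 <= y ^+ 2 -> x <= y.
Proof. by move=> hx hy; rewrite (ler_pXn2r (isT : (0 < 2)%N)) ?nnegrE. Qed.
Lemma coreK (R : numDomainType) (a b c d : R) :
  a \is Num.real -> b \is Num.real -> c \is Num.real -> d \is Num.real ->
  a ^+ 2 + b ^+ 2 = 1 -> c ^+ 2 + d ^+ 2 = 1 -> 0 <= b -> 0 <= d ->
  a < 1 -> c <= a -> c < c * a + d * b /\ 0 <= c * (- b) + a * d.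
Proof.
move=> ra rb rc rd hab hcd b0 d0 a1 ca.
have ea : a ^+ 2 = 1 - b ^+ 2 by rewrite -hab addrK.
have ec : c ^+ 2 = 1 - d ^+ 2 by rewrite -hcd addrK.
have [c0|c0] := real_ge0P rc.
- have a0 : 0 <= a := le_trans c0 ca.
  have bd : b <= d.
    apply: sq_le_nneg => //.
    have : c ^+ 2 <= a ^+ 2 by rewrite (ler_pXn2r (isT : (0 < 2)%N)) ?nnegrE.
    by rewrite ea ec lerD2l lerN2.
  split.
  + rewrite -subr_gt0.
    have h1 : b * b <= d * b by rewrite ler_wpM2r.
    have h2 : c * (1 - a) <= a * (1 - a) by rewrite ler_wpM2r // subr_ge0 ltW.
    have -> : c * a + d * b - c = d * b - c * (1 - a) by ring.
    apply: (@lt_le_trans _ _ (b * b - a * (1 - a))); last by rewrite lerB.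
    have -> : b * b - a * (1 - a) = 1 - a.
      have -> : b * b = 1 - a ^+ 2 by rewrite -expr2 -hab; ring.
      by ring.
    by rewrite subr_gt0.
  + rewrite mulrN addrC subr_ge0.
    apply: (@le_trans _ _ (c * d)); first by rewrite ler_wpM2l.
    by rewrite ler_wpM2r.
- split.
  + rewrite -subr_gt0.
    have -> : c * a + d * b - c = d * b + (- c) * (1 - a) by ring.
    apply: ltr_wpDl; first by rewrite mulr_ge0.
    by rewrite mulr_gt0 // ?oppr_gt0 // subr_gt0.
  + have [a0|a0] := real_ge0P ra.
    * have h1 : 0 <= c * - b by rewrite mulrN -mulNr mulr_ge0 // oppr_ge0; apply: ltW.
      by rewrite addr_ge0 // mulr_ge0.
    * have db : d <= b.
        apply: sq_le_nneg => //.
        have : a ^+ 2 <= c ^+ 2.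
          have ha : 0 <= - a by rewrite oppr_ge0; apply: ltW.
          have hc : 0 <= - c by rewrite oppr_ge0; apply: ltW.
          rewrite -sqrrN -(sqrrN c) (ler_pXn2r (isT : (0 < 2)%N)) ?nnegrE //.
          by rewrite lerN2.
        by rewrite ea ec lerD2l lerN2.
      have -> : c * (- b) + a * d = (- c) * b - (- a) * d by ring.
      rewrite subr_ge0.
      apply: (@le_trans _ _ ((- a) * b)); first by rewrite ler_wpM2l // oppr_ge0 ltW.
      by rewrite ler_wpM2r // lerN2.
Qed.

Lemma keyK (C : numClosedFieldType) (u v : C) :
  `|u| = 1 -> `|v| = 1 -> 0 <= 'Im u -> 0 <= 'Im v -> 'Re u < 1 ->
  'Re v <= 'Re u -> 'Re v < 'Re (v * u^*) /\ 0 <= 'Im (v * u^*).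
Proof.
move=> nu nv iu iv ru vu.
rewrite ReM ImM Re_conj Im_conj mulrN opprK.
apply: coreK => //; rewrite ?Creal_Re ?Creal_Im //.
- by rewrite -normC2_Re_Im nu expr1n.
- by rewrite -normC2_Re_Im nv expr1n.
Qed.

Lemma Re_lt1 (C : numClosedFieldType) (u : C) : `|u| = 1 -> u != 1 -> 'Re u < 1.
Proof.
move=> nu u1; have [le eq] := leif_Re_Creal u; rewrite nu in le eq.
rewrite lt_neqAle le andbT eq; apply: contra u1 => u0.
by rewrite -(ger0_norm u0) nu.
Qed.

Lemma unit_norm (C : numClosedFieldType) (w : C) m : (0 < m)%N -> w ^+ m = 1 -> `|w| = 1.
Proof.
move=> m0 h; have := congr1 Num.norm h; rewrite normrX normr1 => /eqP.
by rewrite pexpr_eq1 // => /eqP.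
Qed.

Lemma conj_mulr (C : numClosedFieldType) (w : C) : `|w| = 1 -> w^* * w = 1.
Proof. by move=> nw; rewrite mulrC -normCK nw expr1n. Qed.

Lemma N1neq1 (C : numDomainType) : (-1 : C) != 1.
Proof.
apply/eqP => h; have : (2%:R : C) == 0 by rewrite -[2%N]/(1+1)%N natrD -{1}h addNr.
by rewrite pnatr_eq0.
Qed.

Lemma prim_exists (C : numClosedFieldType) n : (n > 0)%N -> {z : C | n.-primitive_root z}.
Proof.
pose p : {poly C} := 'X^n - 1; have [r Dp] := closed_field_poly_normal p.
move=> n_gt0; apply/sigW; rewrite (monicP _) ?monicXnsubC // scale1r in Dp.
have rn1: all n.-unity_root r by apply/allP=> z; rewrite -root_prod_XsubC -Dp.
have sz_r: (n < (size r).+1)%N.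
  by rewrite -(size_prod_XsubC r id) -Dp size_XnsubC.
have [|z] := hasP (has_prim_root n_gt0 rn1 _ sz_r); last by exists z.
by rewrite -separable_prod_XsubC -Dp separable_Xn_sub_1 // pnatr_eq0 -lt0n.
Qed.

Lemma k0 k : (1 < k)%N -> (0 < k)%N. Proof. exact: ltnW. Qed.
Lemma N0 k : (1 < k)%N -> (0 < 2 * k)%N. Proof. by move=> h; rewrite muln_gt0 (k0 h). Qed.

Section Roots.
Variables (C : numClosedFieldType) (k : nat).
Hypothesis k1 : (1 < k)%N.
Local Notation y := (k.-root (-1 : C)).
Local Notation N := (2 * k)%N.

Let kk0 : (0 < k)%N := k0 k1.
Let NN0 : (0 < N)%N := N0 k1.

Lemma yk : y ^+ k = -1. Proof. exact: (rootCK kk0). Qed.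
Lemma y2k : y ^+ N = 1. Proof. by rewrite mulnC exprM yk sqrrN expr1n. Qed.
Lemma ny : `|y| = 1. Proof. have := @unit_norm C y _ NN0 y2k. by []. Qed.
Lemma Imy : 0 <= 'Im y. Proof. exact: Im_rootC_ge0. Qed.
Lemma y1 : y != 1.
Proof. by apply/eqP => h; move: yk; rewrite h expr1n => /esym/eqP; rewrite (negPf (N1neq1 _)). Qed.

Lemma maxK w : w ^+ N = 1 -> w != 1 -> 0 <= 'Im w -> 'Re w <= 'Re y.
Proof.
move=> wN w1 Imw.
have : (w ^+ k) ^+ 2 == 1 by rewrite -exprM mulnC wN.
rewrite sqrf_eq1 => /orP[/eqP wk1|/eqP wkN1]; last exact: (rootC_Re_max kk0 wkN1 Imw).
case: (real_leP (Creal_Re w) (Creal_Re y)) => // ylt; exfalso.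
have nw := unit_norm NN0 wN.
have [h1 h2] := keyK nw ny Imw Imy (Re_lt1 nw w1) (ltW ylt).
have : (y * w^*) ^+ k = -1 by rewrite exprMn -rmorphXn wk1 rmorph1 mulr1 yk.
move/(rootC_Re_max kk0)/(_ h2) => H.
by have := lt_le_trans h1 H; rewrite ltxx.
Qed.

Variable z : C.
Hypothesis zprim : N.-primitive_root z.

Definition cnt (w : C) := #|[set i : 'I_N | 'Re w < 'Re (z ^+ i)]|.

Lemma descent_up m w : (cnt w < m)%N -> w ^+ N = 1 -> 0 <= 'Im w -> exists j, w = y ^+ j.
Proof.
elim: m w => // m IH w cm wN Imw.
case: (eqVneq w 1) => [->|w1]; first by exists 0%N.
have nw := unit_norm NN0 wN.
have [h1 h2] := keyK ny nw Imy Imw (Re_lt1 ny y1) (maxK wN w1 Imw).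
have w'N : (w * y^*) ^+ N = 1 by rewrite exprMn -rmorphXn y2k rmorph1 mulr1.
have [i0 Dw'] := prim_rootP zprim w'N.
have cnt' : (cnt (w * y^*) < cnt w)%N.
  apply: proper_card; apply/properP; split.
    by apply/subsetP => i; rewrite !inE => h; exact: lt_trans h1 h.
  by exists i0; rewrite !inE -Dw' ?ltxx.
have [j Dj] := IH _ (leq_trans cnt' cm) w'N h2.
exists j.+1; rewrite exprS mulrC -Dj -mulrA conj_mulr ?mulr1 //; exact: ny.
Qed.

Lemma descent w : w ^+ N = 1 -> exists j, w = y ^+ j.
Proof.
move=> wN; have nw := unit_norm NN0 wN.
case: (real_ge0P (Creal_Im w)) => Imw; first exact: (descent_up (ltnSn _) wN Imw).
have wcN : w^* ^+ N = 1 by rewrite -rmorphXn wN rmorph1.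
have Imc : 0 <= 'Im w^* by rewrite Im_conj oppr_ge0 ltW.
have [j Dj] := descent_up (ltnSn _) wcN Imc.
exists (j * N.-1)%N.
have : w^* * w = 1 by apply: conj_mulr.
rewrite Dj => h.
have e : y ^+ j * y ^+ (j * N.-1) = 1.
  by rewrite -exprD -mulnS prednK ?NN0 // mulnC exprM y2k expr1n.
have : y ^+ (j * N.-1) * (y ^+ j * w) = w by rewrite mulrA (mulrC _ (y ^+ j)) e mul1r.
by rewrite h mulr1 => ->.
Qed.

Lemma y_prim : N.-primitive_root y.
Proof.
have [m pm mdvd] := prim_order_exists NN0 y2k.
have [j Dj] := descent (prim_expr_order zprim).
have : z ^+ m == 1 by rewrite Dj -exprM mulnC exprM (prim_expr_order pm) expr1n.
rewrite -(prim_order_dvd zprim) => Ndvdm.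
have -> : N = m by apply/eqP; rewrite eqn_dvd mdvd Ndvdm.
exact: pm.
Qed.

End Roots.

Lemma prod_exprz (C : fieldType) (I : finType) (P : pred I) (a : I -> int) (x : C) :
  x != 0 -> \prod_(i | P i) x ^ (a i) = x ^ (\sum_(i | P i) a i).
Proof.
move=> x0; apply: (big_rec2 (fun p s => p = x ^ s)) => [|i p s _ ->].
  by rewrite expr0z.
by rewrite expfzDr.
Qed.

Section Omega.
Variables (C : numClosedFieldType) (k : nat).
Hypothesis k1 : (1 < k)%N.
Local Notation y := (k.-root (-1 : C)).
Local Notation om := ((k.-root (-1 : C)) ^+ 2).

Lemma yprim : (2 * k).-primitive_root y.
Proof. have [z zp] := prim_exists C (N0 k1); exact (y_prim k1 zp). Qed.

Lemma om_prim : k.-primitive_root om.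
Proof.
have := dvdn_prim_root yprim (dvdn_mull 2 (dvdnn k)).
by rewrite mulnK ?(k0 k1).
Qed.

Lemma y0 : y != 0.
Proof. by rewrite -normr_eq0 (ny C k1) oner_eq0. Qed.

Lemma om0 : om != 0.
Proof. by rewrite expf_neq0 // y0. Qed.

Lemma om_root r : r ^+ k = 1 -> exists a : nat, r = om ^+ a.
Proof. by move=> h; have [i ->] := prim_rootP om_prim h; exists i. Qed.

Lemma om_dvd m : om ^+ m = 1 -> (k %| m)%N.
Proof. by move=> h; rewrite (prim_order_dvd om_prim) h. Qed.

Lemma om_neg m : om ^+ m = -1 ->
  exists s : int, ((Posz m)%:~R : rat) = s%:~R * k%:R + k%:R / 2.
Proof.
move=> h.
have : y ^+ (2 * m) == y ^+ k by rewrite exprM h (yk C k1).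
rewrite (eq_prim_root_expr yprim) (@modn_small k (2 * k)); last first.
  by rewrite -{1}[k]mul1n ltn_pmul2r ?(k0 k1).
move/eqP => hm.
set q := ((2 * m) %/ (2 * k))%N.
exists (Posz q).
have e := divn_eq (2 * m) (2 * k); rewrite hm -/q in e.
rewrite -[LHS]/(m%:R) -[(Posz _)%:~R]/(q%:R).
have -> : (m%:R : rat) = ((2 * m)%N%:R) / 2 by rewrite natrM; field.
by rewrite e !natrD !natrM; field.
Qed.

Lemma om_negz (z s : int) : (z%:~R : rat) = s%:~R * k%:R + k%:R / 2 -> om ^ z = -1.
Proof.
move=> h.
have h2 : (2 * z) = Posz (2 * k) * s + Posz k.
  apply: (@intr_inj rat).
  rewrite intrD !intrM h.
  rewrite -[(Posz k)%:~R]/(k%:R : rat) -[(Posz (2 * k))%:~R]/((2 * k)%N%:R : rat).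
  rewrite -[(2 : int)%:~R]/(2%:R : rat) natrM.
  by field.
rewrite exprnP exprz_exp h2 expfzDr ?y0 // -exprz_exp -exprnP (prim_expr_order yprim).
by rewrite exp1rz mul1r -exprnP (yk C k1).
Qed.

Lemma om_z1 (z s : int) : z = s * k -> om ^ z = 1.
Proof.
move=> ->; rewrite mulrC -exprz_exp -exprnP.
by rewrite (prim_expr_order om_prim) exp1rz.
Qed.

Lemma om_zk (z : int) : (om ^ z) ^+ k = 1.
Proof. by rewrite exprnP exprz_exp mulrC -exprz_exp -exprnP (prim_expr_order om_prim) exp1rz. Qed.

End Omega.

Lemma tapply_deg (C : numClosedFieldType) n k (E : {set {set 'I_n}}) (x : 'I_n -> C) i :
  (0 < k)%N -> tapply k (deg_tensor C k E) x i = (hdeg E i)%:R * x i ^+ k.-1.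
Proof.
move=> k0; rewrite /tapply (bigD1 (nseq_tuple k.-1 i)) //=.
rewrite [X in _ + X]big1 ?addr0.
  rewrite size_nseq prednK // eqxx /= big_nseq iter_mulr_1.
  have -> : all (fun j => j == i) (nseq k.-1 i) by apply/all_pred1P; rewrite size_nseq.
  by [].
move=> t tne; rewrite size_tuple prednK // eqxx /=.
case: ifP => al; last by rewrite mul0r.
exfalso; move: tne; rewrite eqEtuple => /negP; apply.
have := @all_pred1P _ i t al; rewrite size_tuple => e.
by apply/forallP => j; rewrite !(tnth_nth i) /= e.
Qed.

Lemma set_cons_uniq n (t : seq 'I_n) i (e : {set 'I_n}) :
  [set j in i :: t] = e -> #|e| = (size t).+1 ->
  [/\ i \notin t, uniq t & [set j in t] = e :\ i].
Proof.
move=> Se ce.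
have u : uniq (i :: t) by apply/card_uniqP; rewrite -cardsE Se ce.
move: u => /= /andP[it ut]; split => //.
apply/setP => j; rewrite !inE -Se inE in_cons.
by case: eqVneq => [->|] //=; rewrite (negPf it).
Qed.

Lemma count_fiber n k i (e : {set 'I_n}) : (0 < k)%N -> i \in e -> #|e| = k ->
  #|[pred t : (k.-1).-tuple 'I_n | [set j in i :: val t] == e]| = (k.-1)`!.
Proof.
move=> k0 ie ce.
have ce' : #|e :\ i| = k.-1 by move: ce; rewrite (cardsD1 i) ie => <-.
rewrite -ffactnn -ce' -card_uniq_tuples.
apply: eq_card => t; rewrite !inE.
apply/eqP/andP => [Se | [al ut]].
  have sz : (size t).+1 = k by rewrite size_tuple ce' prednK.
  have [it ut S'] := set_cons_uniq Se (etrans ce (esym sz)).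
  split=> //; apply/allP => j jt; have h : j \in e :\ i by rewrite -S' inE. 
  exact: h.
have S' : [set j in val t] = e :\ i.
  apply/eqP; rewrite eqEcard; apply/andP; split.
    by apply/subsetP => j; rewrite inE => jt; exact: (allP al j jt).
  have -> : #|[set j in val t]| = size t by rewrite cardsE; exact/card_uniqP.
  by rewrite size_tuple.
apply/setP => j; rewrite inE in_cons.
transitivity (j \in i |: e :\ i); last by rewrite setD1K.
have mt : (j \in [set j in val t]) = (j \in e :\ i) by rewrite S'.
by rewrite inE in mt; rewrite in_setU1 mt.
Qed.

Lemma tapply_adj (C : numClosedFieldType) n k (E : {set {set 'I_n}}) (x : 'I_n -> C) i :
  (0 < k)%N -> kuniform k E ->
  tapply k (adj_tensor C k E) x i = \sum_(e in E | i \in e) \prod_(j in e :\ i) x j.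
Proof.
move=> k0 unif; rewrite /tapply /adj_tensor.
set c := ((k.-1)`!%:R)^-1 : C.
transitivity (\sum_(t : (k.-1).-tuple 'I_n) \sum_(e in E | i \in e)
   (if [set j in i :: val t] == e then c * \prod_(j in e :\ i) x j else 0)).
  apply: eq_bigr => t _; rewrite /= size_tuple prednK // eqxx /=.
  case: ifP => SE.
    rewrite (bigD1 [set j in i :: val t]) /=; last by rewrite SE inE mem_head.
    rewrite eqxx [X in _ + X]big1 ?addr0.
      have sz : (size t).+1 = k by rewrite size_tuple prednK.
      have [it ut S'] := set_cons_uniq (erefl _) (etrans (unif _ SE) (esym sz)).
      congr (_ * _); rewrite (big_uniq _ ut); apply: eq_bigl => j.
      by rewrite -S' inE.
    by move=> e /andP[/andP[eE ie] ne]; rewrite eq_sym (negPf ne).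
  rewrite mul0r big1 // => e /andP[eE _].
  by case: eqP => // Se; rewrite Se eE in SE.
rewrite exchange_big /=; apply: eq_bigr => e /andP[eE ie].
rewrite -big_mkcond /= sumr_const count_fiber //; last exact: unif.
rewrite -mulr_natr mulrAC mulVf ?mul1r // pnatr_eq0 -lt0n fact_gt0 //.
Qed.

Lemma exists_max (R : numDomainType) (I : finType) (f : I -> R) (i1 : I) :
  (forall i, f i \is Num.real) -> exists i0, forall i, f i <= f i0.
Proof.
move=> fr.
suff [i0 h] : exists i0, forall i, i \in enum I -> f i <= f i0.
  by exists i0 => i; apply: h; rewrite mem_enum.
elim: (enum I) => [|a s [i0 IH]]; first by exists i1.
case: (real_leP (fr a) (fr i0)) => h.
  by exists i0 => i; rewrite in_cons => /orP[/eqP->|/IH].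
exists a => i; rewrite in_cons => /orP[/eqP->|/IH h2] //.
exact: le_trans h2 (ltW h).
Qed.

Lemma prod_eq_max (R : numDomainType) (I : finType) (A : {set I}) (f : I -> R) (M : R) :
  0 < M -> (forall l, l \in A -> 0 <= f l <= M) ->
  \prod_(l in A) f l = M ^+ #|A| -> forall l, l \in A -> f l = M.
Proof.
move=> M0 hf hp l lA.
have /andP[f0 fM] := hf l lA.
apply/eqP; rewrite eq_le fM /=; apply: contraT.
rewrite -(real_ltNge (ger0_real f0) (gtr0_real M0)) => flt.
move: hp; rewrite (bigD1 l) //= (cardsD1 l A) lA /= exprS => hp.
have hR : \prod_(j in A | j != l) f j <= M ^+ #|A :\ l|.
  have -> : #|A :\ l| = #|[pred j in A | j != l]|.
    by apply: eq_card => j; rewrite !inE andbC.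
  rewrite -prodr_const; apply: ler_prod => j /andP[jA _]; exact: hf.
have hpos : 0 < M ^+ #|A :\ l| by rewrite exprn_gt0.
have : f l * \prod_(j in A | j != l) f j < M * M ^+ #|A :\ l|.
  apply: (@le_lt_trans _ _ (f l * M ^+ #|A :\ l|)).
    by rewrite ler_wpM2l.
  by rewrite ltr_pM2r.
by rewrite hp ltxx.
Qed.

Lemma eq_case (C : numClosedFieldType) (I : finType) (P : pred I) (z : I -> C) (w : C) :
  w != 0 -> (forall e, P e -> `|z e| <= `|w|) ->
  \sum_(e | P e) z e = \sum_(e | P e) w -> forall e, P e -> z e = w.
Proof.
move=> w0 hz hs e Pe.
have wc0 : w^* != 0 by rewrite conjC_eq0.
apply: (mulIf wc0).
apply: (@normC_sum_upper _ _ P (fun e => z e * w^*) (fun _ => w * w^*)) => //.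
  move=> i Pi; rewrite -normCK normrM norm_conjC expr2.
  by rewrite ler_wpM2r // hz.
by rewrite -!mulr_suml hs.
Qed.

Lemma conn_const n (E : {set {set 'I_n}}) (T : Type) (f : 'I_n -> T) :
  hconnected E ->
  (forall e, e \in E -> forall i j, i \in e -> j \in e -> f i = f j) ->
  forall i j, f i = f j.
Proof.
move=> conn hf i j.
case: (eqVneq i j) => [->//|ij].
have [e1 [s [al ie1 jl pth]]] := conn i j ij; clear ij.
elim: s e1 i al ie1 jl pth => [|e2 s IH] e1 i al ie1 jl pth.
  by move: al => /= /andP[e1E _]; apply: hf e1E i j ie1 jl.
move: al pth => /= /andP[e1E al] /andP[ne pth].
have [c] := set0Pn _ ne; rewrite inE => /andP[ce1 ce2].
rewrite (hf e1 e1E i c ie1 ce1).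
exact: IH e2 c al ce2 jl pth.
Qed.

Section Forward.
Variables (C : numClosedFieldType) (n k : nat) (E : {set {set 'I_n}}).
Hypotheses (k1 : (1 < k)%N) (unif : kuniform k E) (conn : hconnected E).
Variables (x : 'I_n -> C) (s : C).
Hypothesis xnz : exists i, x i != 0.
Hypothesis s1 : s ^+ 2 = 1.
Hypothesis eig : forall i,
  \sum_(e in E | i \in e) s * \prod_(j in e :\ i) x j = (hdeg E i)%:R * x i ^+ k.-1.

Local Notation om := ((k.-root (-1 : C)) ^+ 2).

Let ns : `|s| = 1. Proof. exact: (unit_norm (isT : (0 < 2)%N) s1). Qed.
Let kk0 : (0 < k)%N. Proof. exact: ltnW. Qed.

Let hdeg_sum i (w : C) : (hdeg E i)%:R * w = \sum_(e in E | i \in e) w.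
Proof. by rewrite mulr_natl /hdeg -sumr_const; apply: eq_bigl => e; rewrite inE. Qed.

Let cardD e i : e \in E -> i \in e -> #|e :\ i| = k.-1.
Proof. by move=> eE ie; move: (unif eE); rewrite (cardsD1 i) ie => <-. Qed.

Lemma fwd_exists : exists g (a : 'I_n -> nat),
  [/\ g != 0, forall i, x i = g * om ^+ a i &
      forall e, e \in E -> om ^+ (\sum_(j in e) a j) = s].
Proof.
have [i1 xi1] := xnz.
have [i0 hmax] := @exists_max _ _ (fun i => `|x i|) i1 (fun i => normr_real (x i)).
set M := `|x i0| in hmax.
have M0 : 0 < M by apply: lt_le_trans (hmax i1); rewrite normr_gt0.
have step i : `|x i| = M -> forall e, e \in E -> i \in e ->
    s * \prod_(j in e :\ i) x j = x i ^+ k.-1 /\ forall j, j \in e -> `|x j| = M.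
  move=> xiM e eE ie.
  have xi0 : x i != 0 by rewrite -normr_gt0 xiM.
  have h := @eq_case C _ (fun e => (e \in E) && (i \in e))
     (fun e => s * \prod_(j in e :\ i) x j) (x i ^+ k.-1) (expf_neq0 _ xi0).
  have e1 : s * \prod_(j in e :\ i) x j = x i ^+ k.-1.
    apply: h; last by rewrite eE.
      move=> e' /andP[e'E ie'].
      rewrite normrM ns mul1r normr_prod normrX xiM -(cardD e'E ie') -prodr_const.
      by apply: ler_prod => j _; rewrite normr_ge0 hmax.
    by rewrite eig -hdeg_sum.
  split => // j je.
  case: (eqVneq j i) => [->//|ji].
  apply: (@prod_eq_max _ _ (e :\ i) (fun j => `|x j|) M) => //.
    by move=> l _; rewrite normr_ge0 hmax.
  have := congr1 Num.norm e1.
  by rewrite normrM ns mul1r normr_prod normrX xiM (cardD eE ie).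
  by rewrite !inE ji.
have allM i : `|x i| = M.
  have hc := @conn_const n E bool (fun i => `|x i| == M) conn.
  apply/eqP; rewrite (hc _ i i0) ?eqxx //.
  move=> e eE a b ae be.
  rewrite /=; case: (eqVneq `|x a| M) => ha.
    by rewrite ((step a ha e eE ae).2 b be) eqxx.
  case: (eqVneq `|x b| M) => hb //.
  by move: ha; rewrite ((step b hb e eE be).2 a ae) eqxx.
have edge e i : e \in E -> i \in e -> s * \prod_(j in e) x j = x i ^+ k.
  move=> eE ie; rewrite (big_setD1 i ie) /= mulrCA (step i (allM i) e eE ie).1.
  by rewrite -exprS prednK.
have kpow i j : x i ^+ k = x j ^+ k.
  apply: (@conn_const n E C (fun i => x i ^+ k) conn) => e eE a b ae be.
  by rewrite -(edge e a eE ae) -(edge e b eE be).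
have g0 : x i0 != 0 by rewrite -normr_gt0.
have hk i : (x i / x i0) ^+ k = 1 by rewrite expr_div_n (kpow i i0) divff // expf_neq0.
pose a := fun i => val (sval (prim_rootP (om_prim C k1) (hk i))).
have xa i : x i = x i0 * om ^+ a i.
  rewrite /a; case: (prim_rootP _ _) => j /= <-.
  by rewrite mulrC divfK.
exists (x i0), a; split => // e eE.
have [i ie] : exists i, i \in e.
  by apply/set0Pn; rewrite -card_gt0 (unif eE).
have := edge e i eE ie.
rewrite (kpow i i0) (eq_bigr (fun j => x i0 * om ^+ a j)) => [|j _]; last exact: xa.
rewrite big_split /= prodr_const (unif eE) prodrXr mulrCA => h.
have : s * om ^+ (\sum_(j in e) a j) = 1.
  by apply: (mulIf (expf_neq0 k g0)); rewrite mul1r mulrC.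
by move=> h2; rewrite -[LHS]mul1r -[X in X * _]s1 expr2 -mulrA h2 mulr1.
Qed.

End Forward.

Lemma tapply_lap (C : numClosedFieldType) n k (E : {set {set 'I_n}}) (x : 'I_n -> C) i :
  tapply k (laplacian C k E) x i =
  tapply k (deg_tensor C k E) x i - tapply k (adj_tensor C k E) x i.
Proof. by rewrite /tapply -sumrB; apply: eq_bigr => t _; rewrite /laplacian mulrBl. Qed.

Lemma tapply_slap (C : numClosedFieldType) n k (E : {set {set 'I_n}}) (x : 'I_n -> C) i :
  tapply k (signless_laplacian C k E) x i =
  tapply k (deg_tensor C k E) x i + tapply k (adj_tensor C k E) x i.
Proof. by rewrite /tapply -big_split; apply: eq_bigr => t _; rewrite /signless_laplacian mulrDl. Qed.

Lemma hdeg_sumE (C : numClosedFieldType) n (E : {set {set 'I_n}}) i (w : C) :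
  (hdeg E i)%:R * w = \sum_(e in E | i \in e) w.
Proof. by rewrite mulr_natl /hdeg -sumr_const; apply: eq_bigl => e; rewrite inE. Qed.

Lemma sumPosz n (e : {set 'I_n}) (a : 'I_n -> nat) :
  \sum_(j in e) Posz (a j) = Posz (\sum_(j in e) a j).
Proof. by rewrite -natz natr_sum; apply: eq_bigr => j _; rewrite natz. Qed.

Lemma bwd_edge (C : numClosedFieldType) n k (E : {set {set 'I_n}}) (x : 'I_n -> C)
    (g sg : C) (a : 'I_n -> int) e i :
  (1 < k)%N -> kuniform k E -> g != 0 ->
  (forall j, x j = g * expik C k (a j)) -> e \in E -> i \in e ->
  expik C k (\sum_(j in e) a j) = sg ->
  \prod_(j in e :\ i) x j = sg * x i ^+ k.-1.
Proof.
move=> k1 unif g0 xa eE ie ea.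
have om0 := om0 C k1.
have xi0 : x i != 0 by rewrite xa mulf_neq0 // expfz_neq0.
apply: (mulfI xi0).
rewrite -(big_setD1 i ie) /= (eq_bigr (fun j => g * expik C k (a j))) => [|j _]; last exact: xa.
rewrite big_split /= prodr_const (unif _ eE) /expik prod_exprz // -/(expik C k _) ea.
rewrite mulrCA -exprS prednK ?(ltnW k1) // xa exprMn /expik (om_zk C k1) mulr1.
by rewrite mulrC.
Qed.

Unset Implicit Arguments.

Theorem theorem4p1 (C : numClosedFieldType) (n k : nat)
    (E : {set {set 'I_n}}) :
  (3 <= k)%N -> kuniform k E -> hconnected E -> E != set0 ->
  (forall x : 'I_n -> C, (exists i, x i != 0) ->
     (is_eigenvector k (laplacian C k E) x 0 <->
      exists (g : C) (a : 'I_n -> int),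
        [/\ g != 0, (forall i, x i = g * expik C k (a i)) &
            forall e, e \in E -> exists s : int,
              \sum_(j in e) a j = s * k%:Z]))
  /\
  (forall x : 'I_n -> C, (exists i, x i != 0) ->
     (is_eigenvector k (signless_laplacian C k E) x 0 <->
      exists (g : C) (a : 'I_n -> int),
        [/\ g != 0, (forall i, x i = g * expik C k (a i)) &
            forall e, e \in E -> exists s : int,
              ((\sum_(j in e) a j)%:~R : rat) = s%:~R * k%:R + k%:R / 2])).
Proof.
move=> k3 unif conn _.
have k1 : (1 < k)%N by apply: ltnW.
have k0 : (0 < k)%N by apply: ltnW.
split => x xnz; split.
- move=> [_ eig].
  have eig' i : \sum_(e in E | i \in e) 1 * \prod_(j in e :\ i) x j =
                (hdeg E i)%:R * x i ^+ k.-1.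
    have := eig i; rewrite tapply_lap tapply_deg // tapply_adj // mul0r.
    move/eqP; rewrite subr_eq0 => /eqP ->.
    by apply: eq_bigr => e _; rewrite mul1r.
  have [g [a [g0 xa ea]]] := fwd_exists k1 unif conn xnz (expr1n _ _) eig'.
  exists g, (fun i => Posz (a i)); split => //.
  move=> e eE; have /dvdnP [q hq] := om_dvd k1 (ea e eE).
  by exists (Posz q); rewrite sumPosz hq PoszM.
- move=> [g [a [g0 xa ea]]]; split => // i.
  rewrite tapply_lap tapply_deg // tapply_adj // mul0r hdeg_sumE.
  apply/eqP; rewrite subr_eq0; apply/eqP; apply: eq_bigr => e /andP[eE ie].
  have [s hs] := ea e eE.
  by rewrite (bwd_edge (sg := 1) k1 unif g0 xa eE ie) ?mul1r // /expik (om_z1 C k1 hs).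
- move=> [_ eig].
  have eig' i : \sum_(e in E | i \in e) (-1) * \prod_(j in e :\ i) x j =
                (hdeg E i)%:R * x i ^+ k.-1.
    have := eig i; rewrite tapply_slap tapply_deg // tapply_adj // mul0r.
    move/eqP; rewrite addr_eq0 => /eqP ->.
    by rewrite -sumrN; apply: eq_bigr => e _; rewrite mulN1r.
  have [g [a [g0 xa ea]]] := fwd_exists k1 unif conn xnz (etrans (sqrrN 1) (expr1n _ 2)) eig'.
  exists g, (fun i => Posz (a i)); split => //.
  move=> e eE; have [s hs] := om_neg k1 (ea e eE).
  by exists s; rewrite sumPosz.
- move=> [g [a [g0 xa ea]]]; split => // i.
  rewrite tapply_slap tapply_deg // tapply_adj // mul0r hdeg_sumE.
  apply/eqP; rewrite addr_eq0 -sumrN; apply/eqP; apply: eq_bigr => e /andP[eE ie].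
  have [s hs] := ea e eE.
  by rewrite (bwd_edge (sg := -1) k1 unif g0 xa eE ie) ?mulN1r ?opprK // /expik (om_negz C k1 hs).
Qed.
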